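(* Let $P$ be an Eulerian poset of rank $d\ge 3$ with $f$-vector $(f_{-1},\dots,f_d)$. Then $\mathcal{M}_P(z)=\sum_{-1\le i\le j\le d}N_{i,j}(-z)^{j-i}$, and all $N_{i,j}$ are determined by the $f$-vector together with the values $N_{i,j}$ for $0\le i$, $i+2\le j\le d-2$, as follows: $N_{r,r}=N_{-1,r}=N_{r,d}=f_r$ for $-1\le r\le d$; $N_{0,1}=2f_1$; for $1\le i\le d-3$, $$N_{i,i+1}=\bigl((-1)^i+1\bigr)f_{i+1}+\sum_{k=0}^{i-1}(-1)^{i+1-k}N_{k,i+1};$$ $N_{d-2,d-1}=2f_{d-2}$; and for $0\le i\le d-3$, $$N_{i,d-1}=\bigl((-1)^{d-i}+1\bigr)f_i+\sum_{j=i+1}^{d-2}(-1)^{d-j}N_{i,j}.$$ In particular, $\mathcal{M}_P(z)$ is determined by the $f$-vector and the numbers $N_{i,j}$ with $0<i+1<j<d-1$.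
   Context: A ranked poset is a finite poset with a rank function $|\cdot|$ such that covering relations increase rank by one and minimal elements have rank $-1$; $f_r$ is the number of elements of rank $r$. The Möbius function is $\mu[p,p]=1$, $\mu[p,q]=-\sum_{p\le s<q}\mu[p,s]$ for $p<q$, $0$ if $p\not\le q$. An Eulerian poset is a ranked poset with unique minimum and maximum elements such that $\mu[p,q]=(-1)^{|q|-|p|}$ for all $p\le q$. For $-1\le i\le j\le d$, $N_{i,j}$ is the number of pairs $(p,q)$ with $p\le q$, $|p|=i$, $|q|=j$. The Möbius polynomial is $\mathcal{M}_P(z)=\sum_{p\le q\in P}\mu[p,q]z^{|q|-|p|}$. *)

(* Defs.v *)
From HB Require Import structures.
From mathcomp Require Import all_boot all_order all_algebra.
Set Implicit Arguments. Unset Strict Implicit. Unset Printing Implicit Defensive.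
Import Order.TTheory GRing.Theory Num.Theory.
Local Open Scope ring_scope.

Section Poset.
Context {disp : Order.disp_t} {T : finPOrderType disp}.

Definition covers (x y : T) : bool :=
  (x < y)%O && [forall z : T, ~~ ((x < z)%O && (z < y)%O)].

Definition minimalb (x : T) : bool := [forall z : T, ~~ (z < x)%O].

Definition is_rank (rk : T -> int) : Prop :=
  (forall x y, covers x y -> rk y = rk x + 1) /\
  (forall x, minimalb x -> rk x = -1).

(* Moebius function, computed by the defining recursion with fuel;
   fuel #|T| exceeds the length of every chain, so it is exact. *)
Fixpoint mobius_fuel (n : nat) (p q : T) : int :=
  match n with
  | 0 => if p == q then 1 else 0
  | n'.+1 =>
      if p == q then 1
      else if (p <= q)%O then
        - \sum_(s : T | (p <= s)%O && (s < q)%O) mobius_fuel n' p s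
      else 0
  end.

Definition mobius (p q : T) : int := mobius_fuel #|T| p q.

Definition eulerian (rk : T -> int) (d : int) : Prop :=
  is_rank rk /\
  (exists bot : T, forall x : T, (bot <= x)%O) /\
  (exists top : T, (forall x : T, (x <= top)%O) /\ rk top = d) /\
  (forall p q : T, (p <= q)%O -> mobius p q = (-1) ^+ `|rk q - rk p|%N).

Definition fvec (rk : T -> int) (r : int) : nat := #|[set p : T | rk p == r]|.

Definition Nij (rk : T -> int) (i j : int) : nat :=
  #|[set pq : T * T | [&& (pq.1 <= pq.2)%O, rk pq.1 == i & rk pq.2 == j]]|.

Definition mobius_poly (rk : T -> int) : {poly int} :=
  \sum_(p : T) \sum_(q : T | (p <= q)%O)
     (mobius p q)%:P * 'X^(`|rk q - rk p|%N).

End Poset.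

(* Main.v *)
Require Import Defs.
From HB Require Import structures.
From mathcomp Require Import all_boot all_order all_algebra.
From mathcomp Require Import zify ring.
Set Implicit Arguments. Unset Strict Implicit. Unset Printing Implicit Defensive.
Import Order.TTheory GRing.Theory Num.Theory.
Local Open Scope ring_scope.


Section Basics.
Context {disp : Order.disp_t} {T : finPOrderType disp}.
Implicit Types p q s z : T.

Definition Iv (p q : T) := [set s : T | (p <= s)%O && (s <= q)%O].

Lemma Iv_ltl p z q : (p <= z)%O -> (z <= q)%O -> p != z -> (#|Iv z q| < #|Iv p q|)%N.
Proof.
move=> pz zq npz; apply: proper_card; apply/properP; split.
  apply/subsetP=> s; rewrite !inE => /andP[zs sq]; rewrite sq (le_trans pz zs) //.
exists p; first by rewrite !inE lexx (le_trans pz zq).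
rewrite !inE; apply/negP => /andP[zp _]; move: npz; rewrite eq_le pz zp.
by [].
Qed.

Lemma Iv_ltr p z q : (p <= z)%O -> (z <= q)%O -> z != q -> (#|Iv p z| < #|Iv p q|)%N.
Proof.
move=> pz zq nzq; apply: proper_card; apply/properP; split.
  apply/subsetP=> s; rewrite !inE => /andP[ps sz]; rewrite ps (le_trans sz zq) //.
exists q; first by rewrite !inE lexx (le_trans pz zq).
rewrite !inE; apply/negP => /andP[_ qz]; move: nzq; rewrite eq_le zq qz.
by [].
Qed.

Lemma Iv_gt1 p q : (p <= q)%O -> p != q -> (1 < #|Iv p q|)%N.
Proof.
move=> pq npq; apply: leq_trans (Iv_ltl pq (lexx q) npq).
by apply/card_gt0P; exists q; rewrite !inE lexx.
Qed.

Lemma mf_stable n m p q : (#|Iv p q| <= n.+1)%N -> (#|Iv p q| <= m.+1)%N ->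
  mobius_fuel n p q = mobius_fuel m p q.
Proof.
elim: n m p q => [|n IH] m p q hn hm.
- case: m hm => [|m] hm //=.
  case: eqP => // /eqP pq; case: ifP => // le.
  have := Iv_gt1 le pq; lia.
- case: m hm => [|m] hm /=.
  + case: eqP => // /eqP pq; case: ifP => // le.
    have := Iv_gt1 le pq; lia.
  + case: eqP => // /eqP pq; case: ifP => // le.
    congr (- _); apply: eq_bigr => s /andP[ps sq].
    have := Iv_ltr ps (ltW sq) (negbT (lt_eqF sq)).
    by move=> h; apply: IH; lia.
Qed.

Lemma mobius_rec p q : (p < q)%O ->
  mobius p q = - \sum_(s | (p <= s)%O && (s < q)%O) mobius p s.
Proof.
move=> pq; rewrite /mobius.
have: (0 < #|T|)%N by apply/card_gt0P; exists p.
have hmax : (#|Iv p q| <= #|T|)%N by apply: max_card.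
case E: #|T| hmax => [|n] hmax // _.
rewrite /= (lt_eqF pq) (ltW pq); congr (- _).
apply: eq_bigr => s /andP[ps sq].
have := Iv_ltr ps (ltW sq) (negbT (lt_eqF sq)).
move=> h; apply: (mf_stable (m := n.+1)); lia.
Qed.

Section Rank.
Variable rk : T -> int.
Hypothesis Hr : is_rank rk.

Lemma cover_below p q : (p < q)%O -> exists r, (p <= r)%O /\ covers r q.
Proof.
move: {2}#|Iv p q| (leqnn #|Iv p q|) => n; elim: n p => [|n IH] p hn pq.
  have : (0 < #|Iv p q|)%N by apply/card_gt0P; exists q; rewrite !inE lexx ltW.
  lia.
case cov: (covers p q); first by exists p; rewrite lexx.
move: cov; rewrite /covers pq /= => /negbT; rewrite negb_forall.
case/existsP => z /negPn /andP[pz zq].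
have h := Iv_ltl (ltW pz) (ltW zq) (negbT (lt_eqF pz)).
have [r [zr cr]] := IH z ltac:(lia) zq.
by exists r; rewrite (le_trans (ltW pz) zr).
Qed.

Lemma rank_lt p q : (p < q)%O -> rk p < rk q.
Proof.
move: {2}#|Iv p q| (leqnn #|Iv p q|) => n; elim: n q => [|n IH] q hn pq.
  have : (0 < #|Iv p q|)%N by apply/card_gt0P; exists q; rewrite !inE lexx ltW.
  lia.
have [r [pr cr]] := cover_below pq.
have rq : (r < q)%O by case/andP: cr.
rewrite (Hr.1 _ _ cr).
have [<-|npr] := eqVneq p r; first by rewrite ltrDl.
have h := Iv_ltr pr (ltW rq) (negbT (lt_eqF rq)).
have := IH r ltac:(lia) ltac:(by rewrite lt_neqAle npr pr).
move=> H; apply: lt_trans H _; by rewrite ltrDl.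
Qed.

Lemma rank_le p q : (p <= q)%O -> rk p <= rk q.
Proof.
rewrite le_eqVlt => /orP[/eqP->//|/rank_lt/ltW//].
Qed.

End Rank.
End Basics.


Lemma sum_pick (R : nmodType) m n k (F : nat -> R) :
  \sum_(m <= a < n) (if a == k then F a else 0) = if (m <= k < n)%N then F k else 0.
Proof.
case: ifP => h.
- rewrite (bigD1_seq k) ?mem_index_iota ?iota_uniq //= eqxx big1 ?addr0 //.
  by move=> i /negbTE ->.
- rewrite big_seq_cond big1 // => i /andP[]; rewrite mem_index_iota => hi _.
  by case: eqP => // ek; rewrite -ek hi in h.
Qed.

Lemma sign_sub m k : (k <= m)%N -> (-1) ^+ (m - k) = ((-1) ^+ m * (-1) ^+ k)%R :> int.
Proof.
by move=> h; rewrite -signr_odd oddB // signr_addb !signr_odd.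
Qed.

Lemma sign_sq m : (-1) ^+ m * (-1) ^+ m = 1%R :> int.
Proof. by rewrite -exprMn mulrNN mulr1 expr1n. Qed.

Lemma lin_solve (x y E c : int) : E = 0 -> y - x = c * E -> x = y.
Proof. by move=> ->; rewrite mulr0 => /eqP; rewrite subr_eq0 => /eqP. Qed.

Ltac solve_lin h := first [ apply: (lin_solve h (c:=1)); ring
                          | apply: (lin_solve h (c:=-1)); ring ].

Lemma sign_cases m : (((-1) ^+ m)%R : int) = 1%R \/ (((-1) ^+ m)%R : int) = (-1)%R.
Proof. by rewrite -signr_odd; case: (odd m); [right|left]. Qed.

Section Euler.
Context {disp : Order.disp_t} {T : finPOrderType disp}.
Implicit Types p q s z : T.
Variables (rk : T -> int) (d : nat).
Hypothesis Hr : is_rank rk.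
Variables (bot top : T).
Hypotheses (hbot : forall x, (bot <= x)%O) (htop : forall x, (x <= top)%O)
  (rktop : rk top = d%:Z).
Hypothesis hmu : forall p q, (p <= q)%O -> mobius p q = (-1) ^+ `|rk q - rk p|%N.

Lemma rk_bot : rk bot = -1.
Proof.
apply: Hr.2; apply/forallP => z; apply/negP => zb.
by have := hbot z; rewrite (lt_geF zb).
Qed.

Lemma rk_ge x : -1 <= rk x.
Proof.
have := hbot x; rewrite le_eqVlt => /orP[/eqP<-|/(rank_lt Hr)]; rewrite rk_bot //.
by move/ltW.
Qed.

Lemma rk_le x : rk x <= d%:Z.
Proof.
have := htop x; rewrite le_eqVlt => /orP[/eqP->|/(rank_lt Hr)]; rewrite rktop //.
by move/ltW.
Qed.

Lemma bot_uniq x : rk x = -1 -> x = bot.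
Proof.
move=> h; have := hbot x; rewrite le_eqVlt => /orP[/eqP//|/(rank_lt Hr)].
by rewrite rk_bot h.
Qed.

Lemma top_uniq x : rk x = d%:Z -> x = top.
Proof.
move=> h; have := htop x; rewrite le_eqVlt => /orP[/eqP//|/(rank_lt Hr)].
by rewrite rktop h ltxx.
Qed.

Definition e x := `|(rk x + 1)%R|%N.

Lemma eE x : (e x)%:Z = rk x + 1.
Proof. have := rk_ge x; rewrite /e; lia. Qed.

Lemma e_lt x : (e x < d.+2)%N.
Proof. have := rk_ge x; have := rk_le x; rewrite /e; lia. Qed.

Lemma rkE p a : (rk p == a%:Z - 1) = (a == e p).
Proof. have h0 := eE p; apply/idP/idP => /eqP h; apply/eqP; lia. Qed.

Lemma absE p q : (p <= q)%O -> `|(rk q - rk p)%R|%N = (e q - e p)%N.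
Proof.
move=> /(rank_le Hr) h; have := rk_ge p; rewrite /e; lia.
Qed.

Lemma e_le p q : (p <= q)%O -> (e p <= e q)%N.
Proof. move=> /(rank_le Hr) h; have := rk_ge p; rewrite /e; lia. Qed.

Lemma euler p q : (p < q)%O ->
  \sum_(s | (p <= s)%O && (s <= q)%O) (-1) ^+ (e s - e p) = 0%R :> int.
Proof.
move=> pq; have := mobius_rec pq.
move=> h.
transitivity (\sum_(s | (p <= s)%O && (s <= q)%O) mobius p s).
  by apply: esym; apply: eq_bigr => s /andP[ps _]; rewrite hmu // absE.
rewrite (bigD1 q) ?lexx ?(ltW pq) //= h.
rewrite (eq_bigl (fun s => (p <= s)%O && (s < q)%O)) ?addNr //.
by move=> s /=; rewrite -andbA; congr (_ && _); rewrite lt_neqAle andbC.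
Qed.

Lemma NijE i j : (Nij rk i j)%:Z =
  \sum_p \sum_q (((p <= q)%O && (rk p == i) && (rk q == j)) : nat)%:R.
Proof.
rewrite /Nij -sum1_card -natz natr_sum big_mkcond /= pair_bigA /=.
apply: eq_bigr => -[p q] _; rewrite inE /= -andbA.
by case: (_ && _).
Qed.

Lemma e_bot : e bot = 0%N.
Proof. by rewrite /e rk_bot. Qed.

Lemma E1 j : 0 <= j ->
  \sum_(0 <= a < d.+2) (-1) ^+ a * (Nij rk (a%:Z - 1) j)%:Z = 0.
Proof.
move=> hj.
transitivity (\sum_(0 <= a < d.+2) \sum_p \sum_q
   ((-1) ^+ a * (((p <= q)%O && (rk p == a%:Z - 1) && (rk q == j)) : nat)%:R : int)).
  by apply: eq_bigr => a _; rewrite NijE mulr_sumr; apply: eq_bigr => p _; rewrite mulr_sumr.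
rewrite exchange_big /=; under eq_bigr do rewrite exchange_big /=.
rewrite exchange_big /=.
transitivity (\sum_q \sum_p (if (p <= q)%O && (rk q == j) then (-1) ^+ (e p) else 0 : int)).
  apply: eq_bigr => q _; apply: eq_bigr => p _.
  rewrite (eq_bigr (fun a => if a == e p then
            (if (p <= q)%O && (rk q == j) then (-1) ^+ a else 0) else 0 : int)).
    by rewrite sum_pick /= e_lt.
  move=> a _; rewrite rkE.
  by case: eqP; case: (p <= q)%O; case: (rk q == j); rewrite ?mulr1 ?mulr0.
apply: big1 => q _; case hq: (rk q == j); last by apply: big1 => p _; rewrite andbF.
rewrite (eq_bigr (fun p => if (p <= q)%O then (-1) ^+ (e p) else 0 : int)); last first.
  by move=> p _; rewrite andbT.
rewrite -big_mkcond /=.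
have bq : (bot < q)%O.
  rewrite lt_neqAle hbot andbT; apply/eqP => bq.
  by move/eqP: hq; rewrite -bq rk_bot => hj'; rewrite -hj' in hj.
have := euler bq; rewrite e_bot => h0; apply: etrans _ h0.
by apply: eq_big => [s|s _]; [rewrite hbot | rewrite subn0].
Qed.

Lemma E2 i : i <= d%:Z - 1 ->
  \sum_(0 <= a < d.+2) (-1) ^+ a * (Nij rk i (a%:Z - 1))%:Z = 0.
Proof.
move=> hi.
transitivity (\sum_(0 <= a < d.+2) \sum_p \sum_q
   ((-1) ^+ a * (((p <= q)%O && (rk p == i) && (rk q == a%:Z - 1)) : nat)%:R : int)).
  by apply: eq_bigr => a _; rewrite NijE mulr_sumr; apply: eq_bigr => p _; rewrite mulr_sumr.
rewrite exchange_big /=; under eq_bigr do rewrite exchange_big /=.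
transitivity (\sum_p \sum_q (if (p <= q)%O && (rk p == i) then (-1) ^+ (e q) else 0 : int)).
  apply: eq_bigr => p _; apply: eq_bigr => q _.
  rewrite (eq_bigr (fun a => if a == e q then
            (if (p <= q)%O && (rk p == i) then (-1) ^+ a else 0) else 0 : int)).
    by rewrite sum_pick /= e_lt.
  move=> a _; rewrite rkE.
  by case: (a == e q); case: (p <= q)%O; case: (rk p == i); rewrite ?mulr1 ?mulr0.
apply: big1 => p _; case hp: (rk p == i); last by apply: big1 => q _; rewrite andbF.
rewrite (eq_bigr (fun q => if (p <= q)%O then (-1) ^+ (e q) else 0 : int)); last first.
  by move=> q _; rewrite andbT.
rewrite -big_mkcond /=.
have pt : (p < top)%O.
  rewrite lt_neqAle htop andbT; apply/eqP => pt.
  by move/eqP: hp; rewrite pt rktop => hi'; rewrite -hi' in hi; lia.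
have := euler pt => h0.
transitivity ((\sum_(s | (p <= s)%O && (s <= top)%O) (-1) ^+ (e s - e p)) * (-1) ^+ (e p) : int).
  rewrite mulr_suml; apply: eq_big => [s|s]; first by rewrite htop andbT.
  move=> ps.
  by rewrite sign_sub ?e_le // -mulrA sign_sq mulr1.
by rewrite h0 mul0r.
Qed.

Lemma N0 i j : j < i -> Nij rk i j = 0%N.
Proof.
move=> h; apply/eqP; rewrite cards_eq0; apply/eqP/setP => pq; rewrite !inE.
apply/negP => /and3P[le /eqP hp /eqP hq]; have := rank_le Hr le; lia.
Qed.

Lemma Ndiag r : Nij rk r r = fvec rk r.
Proof.
rewrite /Nij /fvec -(card_imset _ (f := fun p : T => (p, p))); last by move=> x y [].
apply: eq_card => -[p q]; rewrite !inE /=; apply/idP/imsetP.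
  case/and3P => le /eqP hp /eqP hq; exists p; first by rewrite inE hp.
  congr (_, _); apply/eqP; move: le; rewrite le_eqVlt => /orP[/eqP->//|/(rank_lt Hr)].
  by rewrite hp hq ltxx.
by case=> x; rewrite inE => /eqP hx [-> ->]; rewrite lexx hx eqxx.
Qed.

Lemma Nbot r : Nij rk (-1) r = fvec rk r.
Proof.
rewrite /Nij /fvec -(card_imset _ (f := fun q : T => (bot, q))); last by move=> x y [].
apply: eq_card => -[p q]; rewrite !inE /=; apply/idP/imsetP.
  case/and3P => le /eqP hp /eqP hq; exists q; first by rewrite inE hq.
  by rewrite (bot_uniq hp).
by case=> x; rewrite inE => /eqP hx [-> ->]; rewrite hbot hx rk_bot !eqxx.
Qed.

Lemma Ntop r : Nij rk r d%:Z = fvec rk r.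
Proof.
rewrite /Nij /fvec -(card_imset _ (f := fun p : T => (p, top))); last by move=> x y [].
apply: eq_card => -[p q]; rewrite !inE /=; apply/idP/imsetP.
  case/and3P => le /eqP hp /eqP hq; exists p; first by rewrite inE hp.
  by rewrite (top_uniq hq).
by case=> x; rewrite inE => /eqP hx [-> ->]; rewrite htop hx rktop !eqxx.
Qed.


Lemma polyX_sign k : (((-1) ^+ k)%R : int)%:P * 'X^k = (- 'X) ^+ k :> {poly int}.
Proof. by rewrite [RHS]exprNn rmorphXn rmorphN1. Qed.

Lemma poly_claim : mobius_poly rk =
  \sum_(0 <= a < d.+2) \sum_(a <= b < d.+2)
     ((Nij rk (a%:Z - 1) (b%:Z - 1))%:Z)%:P * (- 'X) ^+ (b - a)%N.
Proof.
transitivity (\sum_p \sum_q (if (p <= q)%O then (- 'X) ^+ (e q - e p) else 0 : {poly int})).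
  apply: eq_bigr => p _; rewrite big_mkcond; apply: eq_bigr => q _.
  case: ifP => // pq.
  by rewrite (hmu pq) (absE pq) polyX_sign.
apply: esym.
transitivity (\sum_(0 <= a < d.+2) \sum_(a <= b < d.+2) \sum_p \sum_q
   (if (p <= q)%O && (a == e p) && (b == e q) then (- 'X) ^+ (b - a)%N else 0 : {poly int})).
  apply: eq_bigr => a _; apply: eq_bigr => b _.
  rewrite NijE rmorph_sum mulr_suml; apply: eq_bigr => p _.
  rewrite rmorph_sum mulr_suml; apply: eq_bigr => q _.
  rewrite !rkE.
  by case: (_ && _); rewrite /= ?polyC0 ?mul0r ?polyC1 ?mul1r.
under eq_bigr => a _ do rewrite exchange_big /=.
rewrite exchange_big /=; apply: eq_bigr => p _.
under eq_bigr => a _ do rewrite exchange_big /=.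
rewrite exchange_big /=; apply: eq_bigr => q _.
rewrite (eq_bigr (fun a => if a == e p then
     (if (p <= q)%O then (- 'X) ^+ (e q - a) else 0) else 0 : {poly int})).
  by rewrite sum_pick /= e_lt.
move=> a _; case: eqP => [->|ne]; last by apply: big1 => b _; rewrite andbF.
rewrite andbT; case pq: (p <= q)%O; last by apply: big1.
rewrite (eq_bigr (fun b => if b == e q then (- 'X) ^+ (b - e p) else 0 : {poly int})).
  by rewrite sum_pick (e_le pq) e_lt.
by [].
Qed.


Lemma zero_tail1 (j : int) m n : j + 2 <= m%:Z ->
  \sum_(m <= a < n) (-1) ^+ a * (Nij rk (a%:Z - 1) j)%:Z = 0.
Proof.
move=> h; rewrite big_seq_cond big1 // => a; rewrite mem_index_iota andbT.
move=> /andP[h1 _]; rewrite N0 ?mulr0 //; lia.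
Qed.

Lemma zero_head2 (i : int) m n : n%:Z <= i + 1 ->
  \sum_(m <= a < n) (-1) ^+ a * (Nij rk i (a%:Z - 1))%:Z = 0.
Proof.
move=> h; rewrite big_seq_cond big1 // => a; rewrite mem_index_iota andbT.
move=> /andP[_ h1]; rewrite N0 ?mulr0 //; lia.
Qed.

Lemma claim3 : (1 <= d)%N -> (Nij rk 0 1)%:Z = 2 * (fvec rk 1)%:Z.
Proof.
move=> hd1; have h := @E1 1 ltac:(by []).
rewrite (big_cat_nat _ (n:=3)) // (@zero_tail1 _ 3) // in h.
rewrite !big_nat_recr //= big_geq // in h.
rewrite (_ : 0%:Z - 1 = -1) // (_ : 1%:Z - 1 = 0) // (_ : 2%:Z - 1 = 1) // in h.
rewrite Nbot Ndiag expr0 expr1 expr2 !mul1r !mulN1r in h.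
apply/eqP; rewrite eq_sym -subr_eq0; apply/eqP; apply: (etrans _ h); ring.
Qed.

Lemma claim4 i : (1 <= i)%N -> (i + 3 <= d)%N ->
  (Nij rk i%:Z (i.+1)%:Z)%:Z =
    ((-1) ^+ i + 1) * (fvec rk (i.+1)%:Z)%:Z
    + \sum_(0 <= k < i) (-1) ^+ (i.+1 - k)%N * (Nij rk k%:Z (i.+1)%:Z)%:Z.
Proof.
move=> hi1 hid; have h := @E1 (i.+1)%:Z ltac:(lia).
rewrite (@big_cat_nat _ _ _ i.+3 0 d.+2 _ _ (leq0n _) ltac:(lia)) in h.
rewrite (@zero_tail1 (i.+1)%:Z i.+3 d.+2 ltac:(lia)) in h.
rewrite big_nat_recr // big_nat_recr // big_nat_recl // in h.
have e1 : (i.+1)%:Z - 1 = i%:Z by lia.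
have e2 : (i.+2)%:Z - 1 = (i.+1)%:Z by lia.
have e0 : 0%:Z - 1 = -1 by [].
rewrite e0 e1 e2 in h.
rewrite Nbot Ndiag in h.
rewrite (eq_bigr (fun a => - ((-1) ^+ a * (Nij rk a%:Z (i.+1)%:Z)%:Z))) in h; last first.
  move=> a _; rewrite (_ : (a.+1)%:Z - 1 = a%:Z); last lia.
  by rewrite exprS mulN1r mulNr.
rewrite sumrN in h.
rewrite (eq_big_nat _ _ (F2 := fun k => (- (-1) ^+ i) * ((-1) ^+ k * (Nij rk k%:Z (i.+1)%:Z)%:Z))); last first.
  move=> k /andP[_ hk]; rewrite sign_sub; last lia.
  by rewrite exprS mulN1r mulrA mulNr.
rewrite -mulr_sumr.
set S := \sum_(0 <= k < i) _ in h *.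
move: h; rewrite /= !exprS expr0.
by case: (sign_cases i) => -> h; solve_lin h.
Qed.

Lemma claim5 : (3 <= d)%N ->
  (Nij rk (d - 2)%N%:Z (d - 1)%N%:Z)%:Z = 2 * (fvec rk (d - 2)%N%:Z)%:Z.
Proof.
move=> hd; have h := @E2 (d - 2)%N%:Z ltac:(lia).
rewrite (@big_cat_nat _ _ _ (d - 1)%N 0 d.+2 _ _ (leq0n _) ltac:(lia)) in h.
rewrite (@zero_head2 (d - 2)%N%:Z 0 (d - 1)%N ltac:(lia)) in h.
rewrite (@big_ltn _ _ _ (d - 1)%N d.+2 _ ltac:(lia)) in h.
rewrite (@big_ltn _ _ _ (d - 1)%N.+1 d.+2 _ ltac:(lia)) in h.
rewrite (@big_ltn _ _ _ (d - 1)%N.+2 d.+2 _ ltac:(lia)) in h.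
rewrite big_geq in h; last lia.
have e1 : ((d - 1)%N)%:Z - 1 = (d - 2)%N%:Z by lia.
have e2 : ((d - 1)%N.+1)%:Z - 1 = (d - 1)%N%:Z by lia.
have e3 : ((d - 1)%N.+2)%:Z - 1 = d%:Z by lia.
rewrite e1 e2 e3 in h.
rewrite Ndiag Ntop in h.
move: h; rewrite /= !exprS.
by case: (sign_cases (d - 1)) => -> h; solve_lin h.
Qed.

Lemma claim6 i : (i + 3 <= d)%N ->
  (Nij rk i%:Z (d - 1)%N%:Z)%:Z =
    ((-1) ^+ (d - i)%N + 1) * (fvec rk i%:Z)%:Z
    + \sum_(i.+1 <= j < d - 1) (-1) ^+ (d - j)%N * (Nij rk i%:Z j%:Z)%:Z.
Proof.
move=> hid; have h := @E2 i%:Z ltac:(lia).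
rewrite (@big_cat_nat _ _ _ i.+1 0 d.+2 _ _ (leq0n _) ltac:(lia)) in h.
rewrite (@zero_head2 i%:Z 0 i.+1 ltac:(lia)) in h.
rewrite (@big_ltn _ _ _ i.+1 d.+2 _ ltac:(lia)) in h.
rewrite big_nat_recr /= in h; last lia.
rewrite big_nat_recr /= in h; last lia.
have e1 : (i.+1)%:Z - 1 = i%:Z by lia.
have e2 : d%:Z - 1 = (d - 1)%N%:Z by lia.
have e3 : (d.+1)%:Z - 1 = d%:Z by lia.
rewrite e1 e2 e3 Ndiag Ntop big_add1 -subn1 in h.
rewrite (eq_bigr (fun a => - ((-1) ^+ a * (Nij rk i%:Z a%:Z)%:Z))) in h; last first.
  move=> a _; rewrite (_ : (a.+1)%:Z - 1 = a%:Z); last lia.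
  by rewrite exprS mulN1r mulNr.
rewrite sumrN in h.
rewrite (eq_big_nat _ _ (F2 := fun j => (-1) ^+ d * ((-1) ^+ j * (Nij rk i%:Z j%:Z)%:Z))); last first.
  move=> j /andP[_ hj]; rewrite sign_sub; last lia.
  by rewrite mulrA.
rewrite -mulr_sumr sign_sub; last lia.
set S := \sum_(i.+1 <= j < d - 1) _ in h *.
move: h; rewrite /= !exprS.
by case: (sign_cases i) => ->; case: (sign_cases d) => -> h; solve_lin h.
Qed.

Lemma all_claims : (3 <= d)%N ->
  (mobius_poly rk =
        \sum_(0 <= a < d.+2) \sum_(a <= b < d.+2)
          ((Nij rk (a%:Z - 1) (b%:Z - 1))%:Z)%:P * (- 'X) ^+ (b - a)%N) /\
      (forall r : int, -1 <= r <= d%:Z ->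
         (Nij rk r r)%:Z = (fvec rk r)%:Z /\ (Nij rk (-1) r)%:Z = (fvec rk r)%:Z
         /\ (Nij rk r d%:Z)%:Z = (fvec rk r)%:Z) /\
      (Nij rk 0 1)%:Z = 2 * (fvec rk 1)%:Z /\
      (forall i : nat, (1 <= i <= d - 3)%N ->
         (Nij rk i%:Z (i.+1)%:Z)%:Z =
           ((-1) ^+ i + 1) * (fvec rk (i.+1)%:Z)%:Z
           + \sum_(0 <= k < i) (-1) ^+ (i.+1 - k)%N * (Nij rk k%:Z (i.+1)%:Z)%:Z) /\
      (Nij rk (d - 2)%N%:Z (d - 1)%N%:Z)%:Z = 2 * (fvec rk (d - 2)%N%:Z)%:Z /\
    (forall i : nat, (i <= d - 3)%N ->
         (Nij rk i%:Z (d - 1)%N%:Z)%:Z =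
           ((-1) ^+ (d - i)%N + 1) * (fvec rk i%:Z)%:Z
           + \sum_(i.+1 <= j < d - 1) (-1) ^+ (d - j)%N * (Nij rk i%:Z j%:Z)%:Z).
Proof.
move=> hd; split; first exact: poly_claim.
split; first by move=> r _; rewrite Ndiag Nbot Ntop.
split; first by apply: claim3; lia.
split; first by move=> i /andP[h1 h2]; apply: claim4 => //; lia.
split; first exact: claim5.
by move=> i hi; apply: claim6; lia.
Qed.

End Euler.


Lemma determine (disp : Order.disp_t) (T : finPOrderType disp) (rk : T -> int)
  (disp' : Order.disp_t) (T' : finPOrderType disp') (rk' : T' -> int) (d : nat)
  (hd : (3 <= d)%N) (hE : eulerian rk d%:Z) (hE' : eulerian rk' d%:Z)
  (hf : forall r : int, fvec rk' r = fvec rk r)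
  (hN : forall i j : int, 0 < i + 1 < j -> j < d%:Z - 1 -> Nij rk' i j = Nij rk i j) :
  mobius_poly rk' = mobius_poly rk.
Proof.
have [Hr [[bot hbot] [[top [htop rktop]] hmu]]] := hE.
have [Hr' [[bot' hbot'] [[top' [htop' rktop']] hmu']]] := hE'.
have [P1 [P2 [P3 [P4 [P5 P6]]]]] := all_claims Hr hbot htop rktop hmu hd.
have [Q1 [Q2 [Q3 [Q4 [Q5 Q6]]]]] := all_claims Hr' hbot' htop' rktop' hmu' hd.
have adj : forall i : nat, (i + 3 <= d)%N ->
    (Nij rk' i%:Z (i.+1)%:Z)%:Z = (Nij rk i%:Z (i.+1)%:Z)%:Z.
  move=> i hi; case: i hi => [|i] hi; first by rewrite [LHS]Q3 [RHS]P3 hf.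
  rewrite Q4 ?P4; [|lia|lia]; rewrite hf; congr (_ + _).
  apply: eq_big_nat => k /andP[_ hk]; rewrite hN //; lia.
have key : forall a b : nat, (a <= b)%N -> (b < d.+2)%N ->
    (Nij rk' (a%:Z - 1) (b%:Z - 1))%:Z = (Nij rk (a%:Z - 1) (b%:Z - 1))%:Z.
  move=> a b hab hb.
  have [-> | nab] := eqVneq a b.
    have [hr1 _] := P2 (b%:Z - 1) ltac:(lia).
    have [hr1' _] := Q2 (b%:Z - 1) ltac:(lia).
    by rewrite hr1 hr1' hf.
  case: a hab nab => [|a] hab nab.
    have [_ [hr1 _]] := P2 (b%:Z - 1) ltac:(lia).
    have [_ [hr1' _]] := Q2 (b%:Z - 1) ltac:(lia).
    by rewrite (_ : 0%:Z - 1 = -1) // hr1 hr1' hf.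
  have [-> | nbd] := eqVneq b d.+1.
    have [_ [_ hr1]] := P2 ((a.+1)%:Z - 1) ltac:(lia).
    have [_ [_ hr1']] := Q2 ((a.+1)%:Z - 1) ltac:(lia).
    by rewrite (_ : (d.+1)%:Z - 1 = d%:Z) ?hr1 ?hr1' ?hf //; lia.
  case: b hab nab hb nbd => [|b] hab nab hb nbd; first by lia.
  rewrite (_ : (a.+1)%:Z - 1 = a%:Z); last lia.
  rewrite (_ : (b.+1)%:Z - 1 = b%:Z); last lia.
  have [ebd | nbd'] := eqVneq b a.+1.
    rewrite ebd; have [ha | ha] := leqP (a + 3) d; first exact: adj.
    have -> : a = (d - 2)%N by lia.
    have -> : (d - 2)%N.+1 = (d - 1)%N by lia.
    by rewrite Q5 P5 hf.
  have [hbd | hbd] := ltnP b (d - 1).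
    by rewrite hN //; lia.
  have -> : b = (d - 1)%N by lia.
  rewrite Q6 ?P6; [|lia|lia]; rewrite hf; congr (_ + _).
  apply: eq_big_nat => j /andP[hj1 hj2].
  have [-> | nj] := eqVneq j a.+1; first by rewrite adj //; lia.
  by rewrite hN //; lia.
rewrite P1 Q1; apply: eq_bigr => a _; apply: eq_big_nat => b /andP[hab hb].
by rewrite key.
Qed.

Unset Implicit Arguments.

Theorem mainTheorem18 (disp : Order.disp_t) (T : finPOrderType disp)
    (rk : T -> int) (d : nat) (hd : (3 <= d)%N) (hE : eulerian rk d%:Z) :
  let f := fun r : int => ((fvec rk r)%:Z : int) in
  let N := fun i j : int => ((Nij rk i j)%:Z : int) in
  (mobius_poly rk =
        \sum_(0 <= a < d.+2) \sum_(a <= b < d.+2)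
          (N (a%:Z - 1) (b%:Z - 1))%:P * (- 'X) ^+ (b - a)%N) /\
      (forall r : int, -1 <= r <= d%:Z ->
         N r r = f r /\ N (-1) r = f r /\ N r d%:Z = f r) /\
      N 0 1 = 2 * f 1 /\
      (forall i : nat, (1 <= i <= d - 3)%N ->
         N i%:Z (i.+1)%:Z =
           ((-1) ^+ i + 1) * f (i.+1)%:Z
           + \sum_(0 <= k < i) (-1) ^+ (i.+1 - k)%N * N k%:Z (i.+1)%:Z) /\
      N (d - 2)%N%:Z (d - 1)%N%:Z = 2 * f (d - 2)%N%:Z /\
    (forall i : nat, (i <= d - 3)%N ->
         N i%:Z (d - 1)%N%:Z =
           ((-1) ^+ (d - i)%N + 1) * f i%:Z
           + \sum_(i.+1 <= j < d - 1) (-1) ^+ (d - j)%N * N i%:Z j%:Z) /\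
    (forall (disp' : Order.disp_t) (T' : finPOrderType disp') (rk' : T' -> int),
       eulerian rk' d%:Z ->
       (forall r : int, fvec rk' r = fvec rk r) ->
       (forall i j : int, 0 < i + 1 < j -> j < d%:Z - 1 -> Nij rk' i j = Nij rk i j) ->
       mobius_poly rk' = mobius_poly rk).
Proof.
move=> f N.
have [Hr [[bot hbot] [[top [htop rktop]] hmu]]] := hE.
have [P1 [P2 [P3 [P4 [P5 P6]]]]] := all_claims Hr hbot htop rktop hmu hd.
split; first exact: P1.
split; first exact: P2.
split; first exact: P3.
split; first exact: P4.
split; first exact: P5.
split; first exact: P6.
move=> disp' T' rk' hE' hf hN; exact: determine hd hE hE' hf hN.
Qed.
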